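(* Let $K$ be an algebraically closed field of characteristic $0$, let $1\le t\le m\le n$, and let $V,W$ be $K$-vector spaces of dimensions $m,n$. Then there exist elements $x\in X_t(V,W)$ with each of the following combinations of small rank and rank: $\operatorname{sr}(x)=\operatorname{rank}x=0$; $\operatorname{sr}(x)=\operatorname{rank}x=1$; $\operatorname{sr}(x)=u$ and $\operatorname{rank}x=\binom{u+k-1}{u-1}$ for every $u\in\{2,\dots,t+1\}$ and every $k\in\{1,\dots,m-t\}$.
   Context: For $t\ge0$ let $\Lambda_t:\operatorname{Hom}_K(V,W)\to\operatorname{Hom}_K(\bigwedge^tV,\bigwedge^tW)$, $\Lambda_t(\phi)=\bigwedge^t\phi$. $X_t(V,W)$ is the Zariski closure of the image of $\Lambda_t$ in the affine space $\operatorname{Hom}_K(\bigwedge^tV,\bigwedge^tW)$. For $\psi\in\operatorname{Hom}_K(\bigwedge^tV,\bigwedge^tW)$, $\operatorname{rank}\psi$ is its rank as a linear map, and the small rank $\operatorname{sr}(\psi)$ is the maximum of the ranks of the restrictions of $\psi$ to the subspaces $\bigwedge^tU\subseteq\bigwedge^tV$, where $U$ ranges over all subspaces of $V$ of dimension $\le t+1$. *)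

(* Defs.v *)
From HB Require Import structures.
From mathcomp Require Import all_boot all_order all_algebra.
From mathcomp Require Import mpoly.
Set Implicit Arguments. Unset Strict Implicit. Unset Printing Implicit Defensive.
Import Order.TTheory GRing.Theory.
Local Open Scope ring_scope.

(* Strictly increasing maps 'I_t -> 'I_p: they index the t-subsets of 'I_p,
   i.e. the standard basis e_{i_1} /\ ... /\ e_{i_t} (i_1 < ... < i_t)
   of the exterior power /\^t K^p. *)
Definition incmap (t p : nat) :=
  {f : {ffun 'I_t -> 'I_p} | [forall i : 'I_t, forall j : 'I_t, (i < j)%N ==> (f i < f j)%N]}.

(* dimension of /\^t K^p (= 'C(p, t)) *)
Definition wdim (t p : nat) : nat := #|{: incmap t p}|.

Definition widx (t p : nat) (i : 'I_(wdim t p)) : 'I_t -> 'I_p :=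
  val (enum_val i).

(* Matrix of /\^t phi for phi : K^p -> K^q given (row-vector convention,
   v |-> v *m A) by A : 'M_(p, q): the t-th compound matrix of t x t minors. *)
Definition compound (K : comRingType) (t p q : nat) (A : 'M[K]_(p, q))
  : 'M[K]_(wdim t p, wdim t q) :=
  \matrix_(I, J) \det (mxsub (widx I) (widx J) A).

(* Zariski closure X_t(V,W) of the image of Lambda_t in the affine space
   Hom(/\^t V, /\^t W) = 'M_(wdim t m, wdim t n), with V = K^m, W = K^n:
   x lies in it iff every polynomial function on the affine space vanishing
   on the image of Lambda_t vanishes at x. *)
Definition coords (K : comRingType) (a b : nat) (x : 'M[K]_(a, b)) :
  'I_(a * b) -> K := fun k => mxvec x 0 k.

Definition in_Xt (K : fieldType) (t m n : nat)
  (x : 'M[K]_(wdim t m, wdim t n)) : Prop :=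
  forall p : {mpoly K[wdim t m * wdim t n]},
    (forall phi : 'M[K]_(m, n), p.@[coords (compound t phi)] = 0) ->
    p.@[coords x] = 0.

(* Small rank: sr(x) = r means r is the maximum, over subspaces U of K^m of
   dimension <= t+1 (U given as the row space of a square matrix U), of the
   rank of x restricted to /\^t U; the row space of compound t U is exactly
   /\^t U inside /\^t K^m, so that rank is \rank (compound t U *m x). *)
Definition small_rank_is (K : fieldType) (t m n : nat)
  (x : 'M[K]_(wdim t m, wdim t n)) (r : nat) : Prop :=
  (exists U : 'M[K]_m, (\rank U <= t.+1)%N /\ \rank (compound t U *m x) = r) /\
  (forall U : 'M[K]_m, (\rank U <= t.+1)%N -> (\rank (compound t U *m x) <= r)%N).

(* Main.v *)
Require Import Defs.
From HB Require Import structures.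
From mathcomp Require Import all_boot all_order all_algebra.
From mathcomp Require Import mpoly.
From mathcomp Require Import zify fingroup perm.
Set Implicit Arguments. Unset Strict Implicit. Unset Printing Implicit Defensive.
Import Order.TTheory GRing.Theory.
Local Open Scope ring_scope.

Section Inc.
Variables (t p : nat).
Implicit Types I J : 'I_(wdim t p).

Lemma widx_lt I (i j : 'I_t) : (i < j)%N -> (widx I i < widx I j)%N.
Proof.
move=> lij; rewrite /widx; case: (enum_val I) => f /= /forallP H.
exact: (implyP (forallP (H i) j) lij).
Qed.

Lemma widx_inj I : injective (widx I).
Proof.
move=> i j e; apply: val_inj; case: (ltngtP i j) => // h.
- by have := widx_lt I h; rewrite e ltnn.
- by have := widx_lt I h; rewrite e ltnn.
Qed.

Lemma widx_eq I J : widx I =1 widx J -> I = J.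
Proof. move=> e; apply: enum_val_inj; apply: val_inj; apply/ffunP => k; exact: e k. Qed.

Definition nimg I : seq nat := [seq val (widx I k) | k <- enum 'I_t].

Lemma nimg_sorted I : sorted ltn (nimg I).
Proof.
rewrite /nimg sorted_map.
have : sorted ltn (map val (enum 'I_t)) by rewrite val_enum_ord iota_ltn_sorted.
rewrite sorted_map; apply: sub_sorted => i j /= h; exact: widx_lt.
Qed.

Lemma nimg_uniq I : uniq (nimg I).
Proof. exact: (sorted_uniq ltn_trans ltnn (nimg_sorted I)). Qed.

Lemma size_nimg I : size (nimg I) = t.
Proof. by rewrite size_map size_enum_ord. Qed.

Lemma nimg_nth I (k : 'I_t) : nth 0%N (nimg I) k = val (widx I k).
Proof. by rewrite /nimg (nth_map k) ?size_enum_ord // nth_ord_enum. Qed.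

Lemma mem_nimg I v : (v \in nimg I) = [exists k, val (widx I k) == v].
Proof.
apply/mapP/existsP => [[k _ ->]|[k /eqP <-]]; first by exists k.
by exists k; rewrite ?mem_enum.
Qed.

Lemma nimg_inj I J : nimg I = nimg J -> I = J.
Proof. by move=> e; apply: widx_eq => k; apply: val_inj; rewrite -!nimg_nth e. Qed.

Definition img I : {set 'I_p} := [set widx I k | k : 'I_t].

Lemma card_img I : #|img I| = t.
Proof. by rewrite card_imset ?card_ord //; apply: widx_inj. Qed.

Lemma mem_img I j : (j \in img I) = (val j \in nimg I).
Proof.
rewrite mem_nimg; apply/imsetP/existsP => [[k _ ->]|[k /eqP e]]; first by exists k.
by exists k => //; apply: val_inj.
Qed.

End Inc.

Lemma nimg_eqP t m n (I : 'I_(wdim t m)) (J : 'I_(wdim t n)) :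
  (nimg I = nimg J) <-> (forall k, val (widx I k) = val (widx J k)).
Proof.
split=> [e k|e]; first by rewrite -!nimg_nth e.
by apply: eq_map => k; rewrite e.
Qed.

Lemma nimg_neq t m n (I : 'I_(wdim t m)) (J : 'I_(wdim t n)) :
  nimg I != nimg J -> exists k, val (widx I k) \notin nimg J.
Proof.
move=> ne.
have : ~~ all (mem (nimg J)) (nimg I).
  apply/negP => /allP sub; move/eqP: ne; apply.
  apply: (irr_sorted_eq ltn_trans ltnn); try exact: nimg_sorted.
  have [] := uniq_min_size (nimg_uniq I) sub; first by rewrite !size_nimg.
  by [].
case/allPn => v /mapP[k _ ->] nin; by exists k.
Qed.

Definition Dg (K : nzRingType) m n (d : 'I_m -> K) : 'M[K]_(m, n) :=
  \matrix_(i, j) (((i : nat) == j)%:R * d i).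

Lemma compound_Dg (K : comNzRingType) t m n (d : 'I_m -> K)
    (I : 'I_(wdim t m)) (J : 'I_(wdim t n)) :
  compound t (Dg n d) I J = (nimg I == nimg J)%:R * \prod_k d (widx I k).
Proof.
rewrite mxE; case: eqP => [e|/eqP ne].
  have ek := (nimg_eqP I J).1 e.
  rewrite mul1r.
  have -> : mxsub (widx I) (widx J) (Dg n d) = diag_mx (\row_k d (widx I k)).
    apply/matrixP=> i j; rewrite !mxE -ek.
    have -> : (val (widx I i) == val (widx I j)) = (i == j).
      by apply/eqP/eqP => [h|->]//; apply: (widx_inj (val_inj h)).
    by case: eqP => _; rewrite ?mul1r ?mul0r ?mulr1n ?mulr0n.
  by rewrite det_diag; apply: eq_bigr => k _; rewrite mxE.
have [k0 nin] := nimg_neq ne.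
rewrite mul0r (expand_det_row _ k0) big1 // => j _.
rewrite !mxE; case: eqP => e; last by rewrite !mul0r.
case/negP: nin; rewrite mem_nimg; apply/existsP; exists j; apply/eqP; exact: esym e.
Qed.

Lemma rank_rows (F : fieldType) p q (M : 'M[F]_(p, q)) (P : pred 'I_p) (g : 'I_p -> 'I_q) :
  {in P &, injective g} ->
  (forall i, row i M = if P i then delta_mx 0 (g i) else 0) -> \rank M = #|P|.
Proof.
move=> ginj hrow.
have eqS : (M :=: \sum_(i | P i) <<delta_mx 0 (g i) : 'rV[F]_q>>)%MS.
  apply/eqmxP/andP; split.
    apply/row_subP => i; rewrite hrow; case: ifP => Pi; last by rewrite sub0mx.
    by apply: (sumsmx_sup i) => //; rewrite genmxE.
  apply/sumsmx_subP => i Pi; rewrite genmxE.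
  by have := row_sub i M; rewrite hrow Pi.
rewrite eqS (mxdirectP (mxdirect_delta _ ginj)) /= -sum1_card.
by apply: eq_bigr => i _; rewrite mxrank_gen mxrank_delta.
Qed.

Definition mkidx t p (f : 'I_t -> 'I_p) (H : forall i j : 'I_t, (i < j)%N -> (f i < f j)%N) :
  'I_(wdim t p).
Proof.
refine (enum_rank (exist _ (finfun f) _ : incmap t p)).
by apply/forallP => i; apply/forallP => j; apply/implyP; rewrite !ffunE; apply: H.
Defined.

Lemma widx_mkidx t p f H : widx (@mkidx t p f H) =1 f.
Proof. by move=> k; rewrite /widx /mkidx enum_rankK /= ffunE. Qed.

Lemma lift_idx_subproof t m n (h : (m <= n)%N) (I : 'I_(wdim t m)) :
  forall i j : 'I_t, (i < j)%N -> (widen_ord h (widx I i) < widen_ord h (widx I j))%N.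
Proof. by move=> i j /=; apply: widx_lt. Qed.

Definition lift_idx t m n (h : (m <= n)%N) (I : 'I_(wdim t m)) : 'I_(wdim t n) :=
  mkidx (lift_idx_subproof h I).

Lemma nimg_lift_idx t m n (h : (m <= n)%N) I : nimg (@lift_idx t m n h I) = nimg I.
Proof. by apply/nimg_eqP => k; rewrite widx_mkidx. Qed.

Definition xmat (F : fieldType) t m n (P : pred 'I_(wdim t m)) : 'M[F]_(wdim t m, wdim t n) :=
  \matrix_(I, J) ((nimg I == nimg J)%:R * (P I)%:R).

Lemma rank_xmat (F : fieldType) t m n (h : (m <= n)%N) (P : pred 'I_(wdim t m)) :
  \rank (xmat F n P) = #|P|.
Proof.
apply: (@rank_rows _ _ _ _ P (lift_idx h)).
  move=> I J _ _ e; apply: nimg_inj; by rewrite -(nimg_lift_idx h I) e nimg_lift_idx.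
move=> I; apply/rowP => J; rewrite !mxE.
have -> : (nimg I == nimg J) = (J == lift_idx h I).
  apply/eqP/eqP => [e|->]; last by rewrite nimg_lift_idx.
  by apply: nimg_inj; rewrite nimg_lift_idx.
case: (P I); rewrite ?mxE ?mulr1 ?mulr0 //=.
Qed.

Lemma closure_poly (K : fieldType) (hK : [pchar K] =i pred0) N (p : {mpoly K[N]})
    (E : 'I_N -> {poly K}) :
  (forall s : K, s != 0 -> p.@[fun i => (E i).[s]] = 0) -> p.@[fun i => (E i).[0]] = 0.
Proof.
move=> hyp.
pose Q := \sum_(mo <- msupp p) (p@_mo)%:P * \prod_i E i ^+ mo i.
have HQ s : Q.[s] = p.@[fun i => (E i).[s]].
  rewrite mevalE /Q horner_sum; apply: eq_bigr => mo _.
  rewrite hornerM hornerC horner_prod; congr (_ * _); apply: eq_bigr => i _.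
  by rewrite horner_exp.
have nz i : (i.+1)%:R != 0 :> K by rewrite ((pcharf0P K).1 hK).
have Q0 : Q = 0.
  apply: (@roots_geq_poly_eq0 _ Q [seq (i.+1)%:R | i <- iota 0 (size Q)]).
  - by apply/allP => x /mapP [i _ ->]; rewrite /root HQ hyp.
  - rewrite map_inj_uniq ?iota_uniq // => i j e.
    wlog le : i j e / (i <= j)%N.
      by move=> W; case: (leqP i j) => h; [|apply/esym]; apply: W => //; apply: ltnW.
    have h : ((j - i)%:R : K) = 0.
      by apply: (addrI (i.+1)%:R); rewrite addr0 -natrD addSn subnKC.
    move/eqP: h; rewrite ((pcharf0P K).1 hK) subn_eq0 => h.
    by apply/eqP; rewrite eqn_leq le h.
  - by rewrite size_map size_iota.
by rewrite -HQ Q0 horner0.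
Qed.

Lemma in_Xt_limit (K : fieldType) (hK : [pchar K] =i pred0) t m n
    (x : 'M[K]_(wdim t m, wdim t n)) (Em : 'M[{poly K}]_(wdim t m, wdim t n))
    (phi : K -> 'M[K]_(m, n)) :
  (forall s, s != 0 -> map_mx (horner^~ s) Em = compound t (phi s)) ->
  map_mx (horner^~ 0) Em = x -> in_Xt x.
Proof.
move=> h1 h0 p hp.
pose E k := mxvec Em 0 k.
have cE (y : K) k : (E k).[y] = mxvec (map_mx (horner^~ y) Em) 0 k.
  by rewrite -map_mxvec mxE.
rewrite (@meval_eq _ _ _ (fun k => (E k).[0])); last by move=> k; rewrite cE h0.
apply: closure_poly => // s s0.
by rewrite (@meval_eq _ _ _ (coords (compound t (phi s)))) // => k; rewrite cE h1.
Qed.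

Lemma card_count (T : finType) (P : pred T) : #|P| = count P (enum T).
Proof. rewrite cardE -size_filter /enum_mem -filter_predI; congr size; apply: eq_filter => x /=; by rewrite andbT. Qed.

Definition ballb t p (b : nat) (I : 'I_(wdim t p)) := all (fun v => v < b)%N (nimg I).
Definition hasA t p (a : nat) (I : 'I_(wdim t p)) := all (fun v => v \in nimg I) (iota 0 a).
Definition cntA t p (a : nat) (I : 'I_(wdim t p)) := count (fun v => v < a)%N (nimg I).

Lemma cntA_le t p a (I : 'I_(wdim t p)) : (cntA a I <= a)%N.
Proof.
rewrite /cntA -size_filter -[a in (_ <= a)%N](size_iota 0).
apply: uniq_leq_size; first by rewrite filter_uniq // nimg_uniq.
by move=> v; rewrite mem_filter mem_iota /= => /andP[].
Qed.

Lemma cntA_eq t p a (I : 'I_(wdim t p)) : (cntA a I == a) = hasA a I.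
Proof.
apply/eqP/allP => [e v|h].
  have sub : {subset filter (fun v => v < a)%N (nimg I) <= iota 0 a}.
    by move=> w; rewrite mem_filter mem_iota /= => /andP[].
  have sz : (size (iota 0 a) <= size (filter (fun v => v < a)%N (nimg I)))%N.
    by rewrite size_iota size_filter -/(cntA a I) e.
  have [_ eqi] := uniq_min_size (filter_uniq _ (nimg_uniq I)) sub sz.
  by move=> vi; move: (eqi v); rewrite vi mem_filter => /andP[].
apply/eqP; rewrite eqn_leq cntA_le /cntA -size_filter -[a in (a <= _)%N](size_iota 0).
apply: uniq_leq_size; first exact: iota_uniq.
by move=> v vi; rewrite mem_filter h // andbT; move: vi; rewrite mem_iota.
Qed.

Lemma count_nimg t p (I : 'I_(wdim t p)) (P : pred nat) :
  #|[pred k | P (val (widx I k))]| = count P (nimg I).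
Proof. by rewrite card_count /nimg count_map. Qed.

Definition dsc (K : fieldType) t m (a b : nat) (s : K) (i : 'I_m) : K :=
  if (i < a)%N then (s ^+ (t - a))^-1 else if (i < b)%N then s ^+ a else 0.

Lemma prod_dsc (K : fieldType) t m a b (s : K) (I : 'I_(wdim t m)) :
  s != 0 -> (a <= t)%N -> (a <= b)%N ->
  \prod_k dsc t a b s (widx I k) = (ballb b I)%:R * s ^+ (t * (a - cntA a I)).
Proof.
move=> s0 at_ ab.
case hb: (ballb b I); last first.
  rewrite mul0r; apply/eqP/prodf_eq0.
  move/negbT: hb; rewrite /ballb; case/allPn => v /mapP[k _ ->] /= hk.
  exists k => //; rewrite /dsc; case: ifP => h1; first by move: hk; rewrite (leq_trans h1 ab).
  by rewrite ifF //; apply/negbTE.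
rewrite mul1r (bigID (fun k => val (widx I k) < a)%N) /=.
rewrite (eq_bigr (fun _ => (s ^+ (t - a))^-1)); last by move=> k h; rewrite /dsc h.
rewrite [X in _ * X](eq_bigr (fun _ => s ^+ a)); last first.
  move=> k h; rewrite /dsc ifF; last exact: negbTE.
  by move/allP: hb => /(_ _ (map_f _ (mem_enum _ k))) ->.
rewrite !prodr_const.
have -> : #|[pred k | val (widx I k) < a]%N| = cntA a I.
  exact: (count_nimg I (fun v => v < a)%N).
have -> : #|(fun i : 'I_t => ~~ (widx I i < a)%N)| = (t - cntA a I)%N.
  rewrite /cntA -(count_nimg I (fun v => v < a)%N) -[t in (t - _)%N]card_ord.
  rewrite -(cardC [pred k | val (widx I k) < a]%N) addKn.
  by apply: eq_card => k; rewrite !inE.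
have cle := cntA_le a I.
rewrite exprVn -!exprM.
have e : (a * (t - cntA a I) = t * (a - cntA a I) + (t - a) * cntA a I)%N by nia.
by rewrite e exprD mulrC mulfK // expf_neq0.
Qed.

Definition Pab t m a b : pred 'I_(wdim t m) := fun I => ballb b I && hasA a I.
Arguments Pab : clear implicits.

Lemma in_Xt_xab (K : fieldType) (hK : [pchar K] =i pred0) t m n a b :
  (1 <= t)%N -> (a <= t)%N -> (a <= b)%N -> in_Xt (xmat K n (Pab t m a b)).
Proof.
move=> t1 at_ ab.
apply: (@in_Xt_limit K hK t m n _
   (\matrix_(I, J) (((nimg I == nimg J) && ballb b I)%:R *: 'X^(t * (a - cntA a I))))
   (fun s => Dg n (dsc t a b s))).
  move=> s s0; apply/matrixP => I J; rewrite compound_Dg prod_dsc // !mxE.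
  rewrite hornerZ hornerXn.
  by case: (nimg I == nimg J); case: (ballb b I); rewrite /= ?mul1r ?mul0r.
apply/matrixP => I J; rewrite !mxE hornerZ hornerXn expr0n /Pab.
have -> : (t * (a - cntA a I) == 0)%N = hasA a I.
  rewrite muln_eq0 (negbTE (lt0n_neq0 t1)) /= subn_eq0 -cntA_eq eqn_leq cntA_le.
  by [].
by case: (nimg I == nimg J); case: (ballb b I); case: (hasA a I); rewrite /= ?mul1r ?mul0r ?mulr1 ?mulr0.
Qed.

Section Count.
Variables t m : nat.

Lemma nimg_lt (I : 'I_(wdim t m)) v : v \in nimg I -> (v < m)%N.
Proof. by case/mapP => k _ ->; apply: ltn_ord. Qed.

Lemma img_inj : injective (@img t m).
Proof.
move=> I J e; apply: nimg_inj; apply: (irr_sorted_eq ltn_trans ltnn); try exact: nimg_sorted.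
have H (I1 I2 : 'I_(wdim t m)) : img I1 = img I2 -> forall v, v \in nimg I1 -> v \in nimg I2.
  move=> e12 v vi; have vm := nimg_lt vi.
  by move: vi; rewrite -[v]/(val (Ordinal vm)) -!mem_img e12.
by move=> v; apply/idP/idP; apply: H.
Qed.

Lemma img_surj (m0 : (0 < m)%N) (S : {set 'I_m}) :
  #|S| = t -> exists I : 'I_(wdim t m), img I = S.
Proof.
move=> cS; pose x0 : 'I_m := Ordinal m0.
have inc : sorted ltn (map val (enum S)).
  rewrite -[enum _](eq_filter (mem_enum _)).
  rewrite -(eq_filter (mem_map val_inj _)) -filter_map.
  by rewrite (sorted_filter ltn_trans) // unlock val_ord_enum iota_ltn_sorted.
pose f (k : 'I_t) := nth x0 (enum S) k.
have szS : size (enum S) = t by rewrite -cardE.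
have H : forall i j : 'I_t, (i < j)%N -> (f i < f j)%N.
  move=> i j lij; rewrite /f -!(nth_map x0 (val x0)) ?szS //.
  by apply: (sorted_ltn_nth ltn_trans) => //; rewrite inE size_map szS.
exists (mkidx H); apply/eqP; rewrite eqEcard card_img cS leqnn andbT.
apply/subsetP => j /imsetP[k _ ->]; rewrite widx_mkidx /f.
by rewrite -mem_enum mem_nth // szS.
Qed.

Definition Aset (a : nat) : {set 'I_m} := [set j : 'I_m | (j < a)%N].

Lemma card_Aset a : (a <= m)%N -> #|Aset a| = a.
Proof.
move=> am.
have -> : Aset a = [set widen_ord am k | k : 'I_a].
  apply/setP => j; rewrite inE; apply/idP/imsetP => [ja|[k _ ->]] //=.
  by exists (Ordinal ja) => //; apply: val_inj.
rewrite card_imset ?card_ord //.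
by move=> i j e; apply: val_inj; move/(congr1 val): e.
Qed.

Lemma Pab_img a b (hab : (a <= b)%N) (hbm : (b <= m)%N) (I : 'I_(wdim t m)) :
  Pab t m a b I = (Aset a \subset img I) && (img I \subset Aset b).
Proof.
rewrite /Pab /ballb /hasA [RHS]andbC; congr (_ && _).
  apply/allP/subsetP => [h j /imsetP[k _ ->]|h v /mapP[k _ ->]].
    by rewrite inE h // mem_nimg; apply/existsP; exists k.
  have : widx I k \in img I by apply/imsetP; exists k.
  by move/h; rewrite inE.
apply/allP/subsetP => [h j|h v]; rewrite ?inE => ja.
  by rewrite mem_img h // mem_iota.
have va : (v < a)%N by move: ja; rewrite mem_iota.
have vm : (v < m)%N by apply: leq_trans hbm; apply: leq_trans hab.
by have := h (Ordinal vm); rewrite inE mem_img; apply.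
Qed.

Lemma card_sets a b (at_ : (a <= t)%N) (ab : (a <= b)%N) (bm : (b <= m)%N) :
  #|[set S : {set 'I_m} | (#|S| == t) && ((Aset a \subset S) && (S \subset Aset b))]|
  = 'C(b - a, t - a).
Proof.
have AB : Aset a \subset Aset b.
  by apply/subsetP => j; rewrite !inE => ja; apply: leq_trans ab.
have cA := card_Aset (leq_trans ab bm).
have cB := card_Aset bm.
have cBA : #|Aset b :\: Aset a| = (b - a)%N.
  by rewrite cardsD (setIidPr AB) cA cB.
rewrite -cBA -cards_draws.
have -> : [set S : {set 'I_m} | (#|S| == t) && ((Aset a \subset S) && (S \subset Aset b))]
   = (fun S' : {set 'I_m} => S' :|: Aset a) @: [set S' : {set 'I_m} | S' \subset Aset b :\: Aset a & #|S'| == (t - a)%N].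
  apply/setP => S; rewrite inE; apply/idP/imsetP.
    case/and3P => /eqP cS sA sB; exists (S :\: Aset a); last first.
      by rewrite setUC -{1}(setID S (Aset a)) (setIidPr sA).
    rewrite inE setSD //= cardsD (setIidPr sA) cS cA.
    by [].
  case=> S'; rewrite inE => /andP[sS' /eqP cS'] ->.
  rewrite subsetUr /= cardsU.
  have -> : S' :&: Aset a = set0.
    apply/setP => j; rewrite !inE; apply/negP => /andP[jS jA].
    by move/subsetP: sS' => /(_ _ jS); rewrite !inE jA.
  rewrite cards0 subn0 cS' cA subnK //.
  rewrite eqxx /= subUset AB andbT.
  by apply: subset_trans sS' (subsetDl _ _).
rewrite card_in_imset // => S1 S2; rewrite !inE => /andP[s1 _] /andP[s2 _] e.
have h (S' : {set 'I_m}) : S' \subset Aset b :\: Aset a -> (S' :|: Aset a) :\: Aset a = S'.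
  move=> sS; apply/setP => j; rewrite !inE.
  case jS: (j \in S'); rewrite /= ?orbT ?andbT; last by rewrite andNb.
  by move/subsetP: sS => /(_ _ jS); rewrite !inE => /andP[].
by rewrite -(h _ s1) e h.
Qed.

Lemma card_Pab a b (m0 : (0 < m)%N) (at_ : (a <= t)%N) (ab : (a <= b)%N) (bm : (b <= m)%N) :
  #|Pab t m a b| = 'C(b - a, t - a).
Proof.
rewrite -card_sets // -(@card_in_imset _ _ (@img t m) (Pab t m a b)); last first.
  by move=> I J _ _; apply: img_inj.
apply: eq_card => S; rewrite [RHS]inE; apply/imsetP/idP.
  by case=> I PI ->; rewrite card_img eqxx /=; have := Pab_img ab bm I; move: PI; rewrite unfold_in /Pab => -> <-.
case/andP => /eqP cS h; have [I e] := img_surj m0 cS.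
by exists I => //; have := Pab_img ab bm I; rewrite unfold_in /Pab e => ->.
Qed.
End Count.

Definition diagm (R : nzRingType) k (P : pred 'I_k) : 'M[R]_k := diag_mx (\row_i (P i)%:R).

Lemma rank_diagm (F : fieldType) k (P : pred 'I_k) : \rank (diagm F P) = #|P|.
Proof.
apply: (@rank_rows _ _ _ _ P id); first by move=> ? ? _ _.
move=> i; rewrite row_diag_mx mxE; case: (P i); by rewrite ?scale1r ?scale0r.
Qed.

Lemma rank_mxsub_le (F : fieldType) m n m' n' (f : 'I_m' -> 'I_m) (g : 'I_n' -> 'I_n)
  (X : 'M[F]_(m, n)) : (\rank (mxsub f g X) <= \rank X)%N.
Proof.
rewrite -[X in mxsub _ _ X]mul1mx mxsub_mul.
apply: leq_trans (mxrankM_maxr _ _) _.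
rewrite -[X in colsub _ X]mulmx1 -mulmx_colsub.
exact: mxrankM_maxl.
Qed.

Lemma rank_add_le (F : fieldType) m n (A B : 'M[F]_(m, n)) :
  (\rank (A + B)%R <= \rank A + \rank B)%N.
Proof.
have := mxrankS (addmx_sub_adds (submx_refl A) (submx_refl B)).
move/leq_trans; apply; exact: mxrank_adds_leqif.
Qed.

Lemma det_mul_expand (R : comNzRingType) t p (C : 'M[R]_(t, p)) (D : 'M[R]_(p, t)) :
  \det (C *m D) = \sum_(f : {ffun 'I_t -> 'I_p}) (\prod_k C k (f k)) * \det (rowsub f D).
Proof.
transitivity (\sum_(f : {ffun 'I_t -> 'I_p}) \sum_(s : 'S_t)
                 (-1) ^+ s * \prod_i (C i (f i) * D (f i) (s i))).
  rewrite exchange_big; apply: eq_bigr => /= s _; rewrite -big_distrr /=.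
  congr (_ * _); rewrite -(bigA_distr_bigA (fun i j => C i j * D j (s i))) /=.
  by apply: eq_bigr => x _; rewrite mxE.
apply: eq_bigr => f _; rewrite big_distrr; apply: eq_bigr => s _ /=.
rewrite big_split /= mulrCA; congr (_ * (_ * _)); apply: eq_bigr => i _.
by rewrite mxE.
Qed.

Lemma diagm_split (R : nzRingType) k (P : pred 'I_k) :
  diagm R P + diagm R (predC P) = 1%:M.
Proof.
apply/matrixP => i j; rewrite !mxE.
rewrite /= -mulrnDl; case: (P i); rewrite /= ?add0r ?addr0 // ; by rewrite ?mulr1n ?mul1rn.
Qed.

Lemma det_rank_lt (F : fieldType) k (M : 'M[F]_k) : (\rank M < k)%N -> \det M = 0.
Proof.
move=> h; apply/eqP; apply: contraLR h => h; rewrite -leqNgt.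
by rewrite mxrank_unit // unitmxE unitfE.
Qed.

Section SR.
Variables (F : fieldType) (t m a : nat) (D : 'M[F]_(t.+1, m)).
Hypothesis at_ : (a <= t)%N.
Let Pa := diagm F (fun j : 'I_m => (j < a)%N).
Hypothesis nice : (\rank (D *m Pa) < a)%N \/ (forall (i : 'I_t.+1) (j : 'I_m), (a <= i)%N -> (D *m Pa) i j = 0).

Lemma det_zero_low (f : 'I_t -> 'I_t.+1) (r : 'I_t.+1) (S : 'I_(wdim t m)) :
  injective f -> (forall k, f k != r) -> (r < a)%N -> hasA a S ->
  \det (mxsub f (widx S) D) = 0.
Proof.
move=> finj fr ra hS.
set M := mxsub f (widx S) D.
pose cA := fun k : 'I_t => (widx S k < a)%N.
have eM : M = M *m diagm F cA + M *m diagm F (predC cA).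
  by rewrite -mulmxDr diagm_split mulmx1.
have ca : cntA a S = a by apply/eqP; rewrite cntA_eq.
have cAc : #|cA| = a.
  by rewrite -ca /cntA -(count_nimg S (fun v => v < a)%N); apply: eq_card.
have r2 : (\rank (M *m diagm F (predC cA)) <= t - a)%N.
  apply: leq_trans (mxrankM_maxr _ _) _; rewrite rank_diagm.
  have := cardC cA; rewrite cAc card_ord => e.
  by rewrite -[X in (_ <= X - _)%N]e addKn; apply: eq_leq; apply: eq_card.
have r1 : (\rank (M *m diagm F cA) <= a.-1)%N.
  have -> : M *m diagm F cA = mxsub f (widx S) (D *m Pa).
    apply/matrixP => i j; rewrite /Pa /diagm !mul_mx_diag !mxE.
    by [].
  case: nice => [h|h].
    apply: leq_trans (rank_mxsub_le _ _ _) _.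
    by rewrite -ltnS (ltn_predK ra).
  set X := mxsub f (widx S) (D *m Pa).
  have -> : X = diagm F (fun i => f i < a)%N *m X.
    apply/matrixP => i j; rewrite /diagm mul_diag_mx [RHS]mxE [X in X * _]mxE.
    case: ltnP => fa; first by rewrite mul1r.
    by rewrite mul0r /X mxE h.
  apply: leq_trans (mxrankM_maxl _ _) _; rewrite rank_diagm.
  have -> : #|(fun i => f i < a)%N| = #|f @: [set i | f i < a]%N|.
    by rewrite card_imset // ; apply: eq_card => i; rewrite inE.
  have ra' : r \in Aset t.+1 a by rewrite inE.
  have cAs : #|Aset t.+1 a :\ r| = a.-1.
    have e := cardsD1 r (Aset t.+1 a).
    rewrite ra' card_Aset in e; last exact: (ltnW (leq_ltn_trans at_ (ltnSn t))).
    by rewrite [in RHS]e add1n.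
  rewrite -cAs.
  apply: subset_leq_card; apply/subsetP => j /imsetP[i]; rewrite inE => fia ->.
  by rewrite !inE fr fia.
apply: det_rank_lt; rewrite eM; apply: leq_ltn_trans (rank_add_le _ _) _.
apply: leq_ltn_trans (leq_add r1 r2) _.
move: ra at_; clear; lia.
Qed.


Definition Wm : 'M[F]_(t.+1 - a, wdim t m) :=
  \matrix_(i, S) (\det (mxsub (lift (inord (a + i))) (widx S) D) * (hasA a S)%:R).
Definition vf (f : 'I_t -> 'I_t.+1) : 'rV[F]_(wdim t m) :=
  \row_S (\det (mxsub f (widx S) D) * (hasA a S)%:R).

Lemma vf_sub (f : 'I_t -> 'I_t.+1) : (vf f <= Wm)%MS.
Proof.
case: (boolP (injectiveb f)) => [/injectiveP finj | /injectivePn [i1 [i2 ne e]]]; last first.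
  have -> : vf f = 0.
    apply/rowP => S; rewrite !mxE (determinant_alternate ne) ?mul0r // => j.
    by rewrite !mxE e.
  by rewrite sub0mx.
have [r rnot] : exists r, forall k, f k != r.
  have : ~~ ([set: 'I_t.+1] \subset [set f k | k : 'I_t]).
    apply/negP => /subset_leq_card; rewrite cardsT card_ord card_imset // card_ord.
    by rewrite ltnn.
  case/subsetPn => r _ /negP nr; exists r => k; apply/eqP => e; apply: nr.
  by rewrite -e; apply/imsetP; exists k.
case: (ltnP r a) => ra.
  have -> : vf f = 0.
    apply/rowP => S; rewrite !mxE; case hS: (hasA a S); last by rewrite mulr0.
    by rewrite (@det_zero_low f r S) ?mul0r.
  by rewrite sub0mx.
pose g i := odflt i (unlift r (f i)).
have gP i : f i = lift r (g i).
  rewrite /g; case: unliftP => [j eq|eq] /=; first exact: eq.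
  by move: (rnot i); rewrite eq eqxx.
have ginj : injective g by move=> i j e; apply: finj; rewrite !gP e.
pose s := perm ginj.
have ri : (r - a < t.+1 - a)%N.
  by rewrite ltn_sub2r // (leq_ltn_trans at_ (ltnSn t)).
pose i0 := Ordinal ri.
have -> : vf f = (-1) ^+ s *: row i0 Wm.
  apply/rowP => S; rewrite !mxE.
  have -> : inord (a + (r - a)) = r :> 'I_t.+1.
    by apply: val_inj; rewrite /= subnKC // inordK // ltn_ord.
  have -> : mxsub f (widx S) D = row_perm s (mxsub (lift r) (widx S) D).
    by apply/matrixP => i j; rewrite !mxE permE gP.
  by rewrite row_permE det_mulmx det_perm mulrA.
by rewrite scalemx_sub // row_sub.
Qed.

End SR.

Lemma factor_nice (F : fieldType) t m a (U : 'M[F]_m) : (a <= m)%N -> (\rank U <= t.+1)%N ->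
  exists C : 'M[F]_(m, t.+1), exists D : 'M[F]_(t.+1, m), U = C *m D /\
   ((\rank (D *m diagm F (fun j : 'I_m => (j < a)%N)) < a)%N \/
    (forall (i : 'I_t.+1) (j : 'I_m), (a <= i)%N ->
       (D *m diagm F (fun j : 'I_m => (j < a)%N)) i j = 0)).
Proof.
move=> am rU.
set r := \rank U.
pose C0 := col_ebase U *m (pid_mx r : 'M[F]_(m, t.+1)).
pose D0 := (pid_mx r : 'M[F]_(t.+1, m)) *m row_ebase U.
have UCD : U = C0 *m D0.
  rewrite /C0 /D0 mulmxA -(mulmxA (col_ebase U)) mul_pid_mx minnn.
  by rewrite (minn_idPr rU) mulmx_ebase.
set Pa := diagm F (fun j : 'I_m => (j < a)%N).
set X := D0 *m Pa.
case: (ltnP (\rank X) a) => hX.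
  by exists C0, D0; split => //; left.
have rX : \rank X = a.
  apply/eqP; rewrite eqn_leq hX andbT; apply: leq_trans (mxrankM_maxr _ _) _.
  rewrite rank_diagm -[X in (_ <= X)%N](card_Aset am).
  by apply: eq_leq; apply: eq_card => j; rewrite inE.
pose G := col_ebase X.
exists (C0 *m G), (invmx G *m D0); split.
  by rewrite -mulmxA (mulmxA G) mulmxV ?col_ebase_unit // mul1mx.
right => i j ai.
rewrite -mulmxA -/X -{1}(mulmx_ebase X) -/G !mulmxA mulVmx ?col_ebase_unit // mul1mx rX.
rewrite mxE big1 // => l _; rewrite mxE.
by rewrite ltnNge ai andbF mul0r.
Qed.

Lemma compound_mul_row (F : fieldType) t m p (C : 'M[F]_(m, p)) (D : 'M[F]_(p, m)) R S :
  compound t (C *m D) R S =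
  \sum_(f : {ffun 'I_t -> 'I_p}) (\prod_k C (widx R k) (f k)) * \det (mxsub f (widx S) D).
Proof.
rewrite mxE mxsub_mul det_mul_expand; apply: eq_bigr => f _.
congr (_ * _); first by apply: eq_bigr => k _; rewrite mxE.
by congr (\det _); apply/matrixP => i j; rewrite !mxE.
Qed.

Lemma sr_bound (F : fieldType) t m a (U : 'M[F]_m) : (a <= t)%N -> (t <= m)%N ->
  (\rank U <= t.+1)%N ->
  (\rank (compound t U *m diagm F (@hasA t m a)) <= t.+1 - a)%N.
Proof.
move=> at_ tm rU.
have [C [D [-> nice]]] := @factor_nice F t m a U (leq_trans at_ tm) rU.
apply: leq_trans (rank_leq_row (Wm a D)).
apply: mxrankS; apply/row_subP => R.
have -> : row R (compound t (C *m D) *m diagm F (@hasA t m a)) =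
   \sum_(f : {ffun 'I_t -> 'I_t.+1}) (\prod_k C (widx R k) (f k)) *: vf a D f.
  apply/rowP => S; rewrite /diagm mul_mx_diag summxE.
  rewrite [LHS]mxE [LHS]mxE compound_mul_row !mxE big_distrl.
  by apply: eq_bigr => f _; rewrite !mxE mulrA.
apply: summx_sub => f _; apply: scalemx_sub; exact: (vf_sub at_ nice).
Qed.

Lemma prod_ballb (K : idomainType) t m c (I : 'I_(wdim t m)) :
  \prod_k (((widx I k) < c)%N%:R : K) = (ballb c I)%:R.
Proof.
case hb: (ballb c I).
  apply: big1 => k _; move/allP: hb => /(_ (val (widx I k))).
  by rewrite mem_nimg => -> //; apply/existsP; exists k.
apply/eqP/prodf_eq0.
move/negbT: hb; rewrite /ballb; case/allPn => v /mapP[k _ ->] /= hk.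
by exists k => //; rewrite (negbTE hk).
Qed.

Lemma compound_pid_x (K : fieldType) t m n c (P : pred 'I_(wdim t m)) :
  compound t (pid_mx c : 'M[K]_m) *m xmat K n P = xmat K n (fun I => ballb c I && P I).
Proof.
have -> : (pid_mx c : 'M[K]_m) = Dg m (fun i => ((i : nat) < c)%N%:R).
  by apply/matrixP => i j; rewrite !mxE -natrM mulnb.
apply/matrixP => I J; rewrite !mxE (bigD1 I) //= big1.
  rewrite compound_Dg prod_ballb eqxx addr0 mxE.
  by case: (ballb c I); case: (P I); case: (nimg I == nimg J); rewrite /= ?mul1r ?mul0r ?mulr0 ?mulr1.
move=> J' nJ; rewrite compound_Dg.
case: eqP => e; last by rewrite !mul0r.
by case/eqP: nJ; apply: nimg_inj.
Qed.

Lemma diagm_x (K : fieldType) t m n a b :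
  xmat K n (Pab t m a b) = diagm K (@hasA t m a) *m xmat K n (Pab t m a b).
Proof.
apply/matrixP => I J; rewrite /diagm mul_diag_mx !mxE /Pab.
by case: (hasA a I); rewrite ?andbF /= ?mul1r ?mul0r ?mulr0.
Qed.

Lemma xab_props (K : fieldType) (hK : [pchar K] =i pred0) t m n a b
  (ht : (1 <= t)%N) (tm : (t <= m)%N) (hmn : (m <= n)%N) (at_ : (a <= t)%N) (ab : (a <= b)%N) (bm : (b <= m)%N) :
  [/\ in_Xt (xmat K n (Pab t m a b)),
      \rank (xmat K n (Pab t m a b)) = 'C(b - a, t - a),
      forall U : 'M[K]_m, (\rank U <= t.+1)%N ->
         (\rank (compound t U *m xmat K n (Pab t m a b)) <= t.+1 - a)%N &
      \rank (compound t (pid_mx (minn b t.+1) : 'M[K]_m) *m xmat K n (Pab t m a b))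
        = 'C(minn b t.+1 - a, t - a)].
Proof.
have m0 : (0 < m)%N by lia.
split.
- exact: in_Xt_xab.
- by rewrite rank_xmat // card_Pab.
- move=> U rU; rewrite diagm_x mulmxA.
  apply: leq_trans (mxrankM_maxl _ _) _; exact: sr_bound.
- rewrite compound_pid_x rank_xmat // -(@card_Pab t m a (minn b t.+1)) //; last 2 first.
  + by rewrite leq_min ab; apply: leq_trans at_ _.
  + by rewrite geq_min bm.
  apply: eq_card => I; rewrite /Pab /ballb unfold_in /= andbA -all_predI.
  congr (_ && _); apply: eq_all => v /=; rewrite !leq_min.
  by case: (v < b)%N; case: (v < t.+1)%N.
Qed.

Lemma xab_sr (K : fieldType) (hK : [pchar K] =i pred0) t m n a b
  (ht : (1 <= t)%N) (tm : (t <= m)%N) (hmn : (m <= n)%N) (at_ : (a <= t)%N) (ab : (a <= b)%N) (bm : (b <= m)%N) :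
  'C(minn b t.+1 - a, t - a) = (t.+1 - a)%N ->
  small_rank_is (xmat K n (Pab t m a b)) (t.+1 - a).
Proof.
move=> hc; have [_ _ h3 h4] := xab_props hK ht tm hmn at_ ab bm.
split; last exact: h3.
exists (pid_mx (minn b t.+1)); split; last by rewrite h4.
by rewrite rank_pid_mx ?geq_minr // geq_min bm.
Qed.

Unset Implicit Arguments.
Theorem proposition2p2 (K : closedFieldType) (hK : [pchar K] =i pred0)
  (t m n : nat) (ht : (1 <= t)%N) (htm : (t <= m)%N) (hmn : (m <= n)%N) :
  (exists x : 'M[K]_(wdim t m, wdim t n),
      @in_Xt K t m n x /\ @small_rank_is K t m n x 0 /\ \rank x = 0%N) /\
  (exists x : 'M[K]_(wdim t m, wdim t n),
      @in_Xt K t m n x /\ @small_rank_is K t m n x 1 /\ \rank x = 1%N) /\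
  (forall u k : nat, (2 <= u <= t.+1)%N -> (1 <= k <= m - t)%N ->
    exists x : 'M[K]_(wdim t m, wdim t n),
      @in_Xt K t m n x /\ @small_rank_is K t m n x u /\ \rank x = 'C(u + k - 1, u - 1)).
Proof.
split; [|split].
- have [h1 h2 h3 h4] := xab_props (n:=n) hK ht htm hmn (leq0n t) (leqnn 0) (leq0n m).
  have r0 : \rank (xmat K n (Pab t m 0 0)) = 0%N by rewrite h2 bin0n subn0; move: ht; case: (t).
  exists (xmat K n (Pab t m 0 0)); split => //; split => //; split.
    exists 0; split; first by rewrite mxrank0.
    by apply/eqP; rewrite -leqn0; apply: leq_trans (mxrankM_maxr _ _) _; rewrite r0.
  by move=> U _; apply: leq_trans (mxrankM_maxr _ _) _; rewrite r0.
- have [h1 h2 h3 h4] := xab_props (n:=n) hK ht htm hmn (leqnn t) (leqnn t) htm.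
  exists (xmat K n (Pab t m t t)); split => //; split.
    have := xab_sr (n:=n) hK ht htm hmn (leqnn t) (leqnn t) htm.
    rewrite subSnn; apply.
    by rewrite (minn_idPl (leqnSn t)) subnn bin0.
  by rewrite h2 subnn bin0.
- move=> u k /andP[u2 ut] /andP[k1 kmt].
  have at_ : (t.+1 - u <= t)%N by lia.
  have ab : (t.+1 - u <= t + k)%N by lia.
  have bm : (t + k <= m)%N by lia.
  have [h1 h2 h3 h4] := xab_props (n:=n) hK ht htm hmn at_ ab bm.
  exists (xmat K n (Pab t m (t.+1 - u) (t + k))); split => //; split.
    have eu : u = (t.+1 - (t.+1 - u))%N by lia.
    rewrite [X in small_rank_is _ X]eu.
    apply: xab_sr => //.
    rewrite (minn_idPr _); last by lia.
    have -> : (t.+1 - (t.+1 - u) = (t - (t.+1 - u)).+1)%N by lia.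
    by rewrite binSn.
  rewrite h2; congr 'C(_, _); lia.
Qed.
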